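(* For $\beta\in\{1,4\}$ write the large-$N$ expansion of the bulk-scaled structure function as $\tilde S_{N,\beta}(\tau)\sim \tilde S_{0,\infty,\beta}(\tau)+N^{-2}\tilde S_{1,\infty,\beta}(\tau)+N^{-4}\tilde S_{2,\infty,\beta}(\tau)+\cdots$. Then for all $\tau>0$ with $\tau\ne1$ (and additionally $\tau\ne2$ when $\beta=4$), $$\tilde S_{1,\infty,\beta}(\tau)=c_\beta\,\tau^2\frac{d^2}{d\tau^2}\tilde S_{0,\infty,\beta}(\tau),$$ $$\tilde S_{2,\infty,\beta}(\tau)=d_\beta\Big(\tau^4\frac{d^4}{d\tau^4}\tilde S_{0,\infty,\beta}(\tau)+8\tau^3\frac{d^3}{d\tau^3}\tilde S_{0,\infty,\beta}(\tau)+12\tau^2\frac{d^2}{d\tau^2}\tilde S_{0,\infty,\beta}(\tau)\Big),$$ with $c_1=-\frac16$, $c_4=-\frac1{24}$, $d_1=\frac7{360}$, $d_4=\frac7{5760}$.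
   Context: $\psi$ is the digamma function. The bulk-scaled structure functions are defined for real $\tau$ and $N>0$ by: $\tilde S_{N,1}(\tau)=2|\tau|-|\tau|\big(\psi(|\tau|N+\tfrac{N+1}2)-\psi(\tfrac{N+1}2)\big)$ for $|\tau|<1$, $\tilde S_{N,1}(\tau)=2-|\tau|\big(\psi(|\tau|N+\tfrac{N+1}2)-\psi(|\tau|N+\tfrac{1-N}2)\big)$ for $|\tau|\ge1$; $\tilde S_{N,4}(\tau)=\frac{|\tau|}2\big(1+\frac12(\psi(N+\frac12)-\psi(N-|\tau|N+\frac12))\big)$ for $|\tau|<1$, $\tilde S_{N,4}(\tau)=\frac{|\tau|}2\big(1+\frac12(\psi(N+\frac12)-\psi(-N+|\tau|N+\frac12))\big)$ for $1<|\tau|<2-1/N$, $\tilde S_{N,4}(\tau)=1$ for $|\tau|\ge2-1/N$. These are $\frac{2\pi}NS_{N,\beta}(\tau N)$ for the structure function $S_{N,\beta}$ of the circular $\beta$ ensemble. The expansion coefficients $\tilde S_{l,\infty,\beta}$ are defined by the large-$N$ asymptotic expansion at fixed $\tau$, which contains only even powers of $1/N$. *)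

(* Defs.v *)
From Stdlib Require Import Reals.
From Coquelicot Require Import Coquelicot.
Open Scope R_scope.

Definition digamma (x : R) : R :=
  real (Lim_seq (fun n : nat => ln (INR n) - sum_f_R0 (fun k => / (x + INR k)) n)).

Definition Stilde (beta : nat) (N tau : R) : R :=
  let t := Rabs tau in
  match beta with
  | 1%nat =>
      if Rlt_dec t 1 then
        2 * t - t * (digamma (t * N + (N + 1) / 2) - digamma ((N + 1) / 2))
      else
        2 - t * (digamma (t * N + (N + 1) / 2) - digamma (t * N + (1 - N) / 2))
  | 4%nat =>
      if Rlt_dec t 1 then
        t / 2 * (1 + / 2 * (digamma (N + / 2) - digamma (N - t * N + / 2)))
      else if Rlt_dec t (2 - / N) then
        t / 2 * (1 + / 2 * (digamma (N + / 2) - digamma (- N + t * N + / 2)))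
      else 1
  | _ => 0
  end.

Definition S0 (beta : nat) (tau : R) : R :=
  real (Lim_seq (fun n : nat => Stilde beta (INR n) tau)).

Definition cbeta (beta : nat) : R := if Nat.eqb beta 1 then - / 6 else - / 24.
Definition dbeta (beta : nat) : R := if Nat.eqb beta 1 then 7 / 360 else 7 / 5760.

Definition S1pred (beta : nat) (tau : R) : R :=
  cbeta beta * tau ^ 2 * Derive_n (S0 beta) 2 tau.

Definition S2pred (beta : nat) (tau : R) : R :=
  dbeta beta * (tau ^ 4 * Derive_n (S0 beta) 4 tau
                + 8 * tau ^ 3 * Derive_n (S0 beta) 3 tau
                + 12 * tau ^ 2 * Derive_n (S0 beta) 2 tau).

(* Main.v *)
Require Import Defs.
From Stdlib Require Import Reals Lra Psatz Lia.
From Coquelicot Require Import Coquelicot.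
Open Scope R_scope.

Definition Lf (u : R) : R :=
  ln (1 + u) - ln (1 - u) - 2 * u - 2 / 3 * u ^ 3 / (1 - u ^ 2) ^ 2
  + 14 / 15 * u ^ 5 * (1 + u ^ 2) / (1 - u ^ 2) ^ 4.

Definition dL (u : R) : R :=
  u ^ 6 * (62 / 3 - 116 / 15 * u ^ 2 + 2 * u ^ 4) / (1 - u ^ 2) ^ 5.

Lemma Lf_deriv (x : R) : -1 < x < 1 -> is_derive Lf x (dL x).
Proof.
  intros [H1 H2].
  assert (Hw : 0 < 1 - x ^ 2) by nra.
  unfold Lf, dL.
  auto_derive.
  - assert (Hw' : 0 < 1 + - (x * (x * 1))) by nra.
    repeat split; try lra; apply Rgt_not_eq; repeat apply Rmult_lt_0_compat; lra.
  - field. repeat split; try lra; nra.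
Qed.

Lemma Lf0 : Lf 0 = 0.
Proof. unfold Lf. replace (1+0) with 1 by ring. replace (1-0) with 1 by ring.
  rewrite ln_1. field. Qed.

Lemma dL_bound (c : R) : 0 <= c <= /3 -> 0 <= dL c <= 48 * c ^ 6.
Proof.
  intros [H1 H2]. unfold dL.
  assert (Hz : 0 <= c^2 <= /9) by (split; nra).
  assert (Hc4 : c^4 = c^2 * c^2) by ring.
  assert (Hp : 0 < 62 / 3 - 116 / 15 * c ^ 2 + 2 * c ^ 4) by (rewrite Hc4; nra).
  assert (Hq : 62 / 3 - 116 / 15 * c ^ 2 + 2 * c ^ 4 <= 21) by (rewrite Hc4; nra).
  assert (Hw : 0 < 1 - c^2) by lra.
  assert (Hw5 : 1 - 5 * c^2 <= (1 - c^2)^5).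
  { destruct Hz as [Hz1 Hz2]. generalize dependent (c^2). intros z Hz1 Hz2 _ _ _ _.
    assert (0 <= z * z) by nra. assert (0 <= z*z*z) by nra.
    assert (0 <= z*z*z*z) by nra.
    replace ((1-z)^5) with (1 - 5*z + 10*z*z - 10 * (z*z*z) + 5*(z*z*z*z) - z*(z*z*z*z)) by ring.
    assert (z*(z*z*z*z) <= z*z*z*z) by nra.
    assert (10*(z*z*z) <= 10*z*z) by nra. nra. }
  assert (H6 : 0 <= c^6) by (apply pow_le; lra).
  assert (Hd : 0 < (1 - c^2)^5) by (apply pow_lt; lra).
  split.
  - apply Rmult_le_pos; [apply Rmult_le_pos; lra | left; apply Rinv_0_lt_compat; lra].
  - unfold Rdiv. rewrite Rmult_assoc. rewrite (Rmult_comm 48).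
    apply Rmult_le_compat_l; [lra|].
    apply Rmult_le_reg_r with ((1 - c^2)^5); [lra|].
    rewrite Rmult_assoc, Rinv_l by lra. lra.
Qed.

Lemma Lf_bound (u : R) : 0 <= u <= /3 -> 0 <= Lf u <= 16 * u ^ 6.
Proof.
  intros [H1 H2].
  destruct (MVT_gen Lf 0 u dL) as [c [Hc Hmvt]].
  - intros x Hx. apply Lf_deriv.
    rewrite Rmin_left in Hx by lra. rewrite Rmax_right in Hx by lra. lra.
  - intros x Hx. rewrite Rmin_left in Hx by lra. rewrite Rmax_right in Hx by lra.
    apply continuity_pt_filterlim. apply (ex_derive_continuous (K:=R_AbsRing) (V:=R_NormedModule) Lf).
    eexists. apply Lf_deriv. lra.
  - rewrite Rmin_left in Hc by lra. rewrite Rmax_right in Hc by lra.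
    rewrite Lf0 in Hmvt.
    destruct (dL_bound c) as [Hd1 Hd2]; [lra|].
    assert (Hc6 : c^6 <= u^6) by (apply pow_incr; lra).
    assert (Hu6 : 0 <= u^6) by (apply pow_le; lra).
    assert (HL : Lf u = dL c * u) by lra. rewrite HL.
    split; [apply Rmult_le_pos; lra|].
    assert (dL c * u <= 48 * u^6 * u) by (apply Rmult_le_compat_r; lra).
    assert (48 * u^6 * u <= 48 * u^6 * /3) by (apply Rmult_le_compat_l; lra).
    lra.
Qed.

Definition Aexp (x : R) : R := ln x + / (24 * x ^ 2) - 7 / (960 * x ^ 4).
Definition Dd (y : R) : R := Aexp (y + 1) - Aexp y - / (y + / 2).

Lemma Dd_Lf (y : R) : 0 < y -> Dd y = Lf (/ (2 * y + 1)).
Proof.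
  intro Hy. unfold Dd, Aexp, Lf.
  assert (E1 : 1 + / (2 * y + 1) = 2 * (y + 1) / (2 * y + 1)) by (field; lra).
  assert (E2 : 1 - / (2 * y + 1) = 2 * y / (2 * y + 1)) by (field; lra).
  rewrite E1, E2.
  rewrite !ln_div by lra. rewrite !ln_mult by lra.
  field. repeat split; try lra; nra.
Qed.

Lemma Dd_bound (y : R) : 1 <= y -> 0 <= Dd y <= / y ^ 6.
Proof.
  intro Hy. rewrite Dd_Lf by lra.
  assert (Hu : 0 < / (2 * y + 1) <= /3).
  { split. apply Rinv_0_lt_compat; lra. apply Rinv_le_contravar; lra. }
  destruct (Lf_bound (/ (2 * y + 1))) as [A B]; [lra|].
  split; [lra|].
  assert (H6 : (/ (2 * y + 1)) ^ 6 <= / 64 * / y ^ 6).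
  { rewrite <- Rinv_pow by lra. rewrite <- Rinv_mult.
    apply Rinv_le_contravar. apply Rmult_lt_0_compat; [lra| apply pow_lt; lra].
    replace (64 * y^6) with ((2*y)^6) by ring. apply pow_incr; lra. }
  assert (0 < / y ^ 6) by (apply Rinv_0_lt_compat, pow_lt; lra).
  lra.
Qed.

Lemma ln1p_le (t : R) : 0 <= t -> 0 <= ln (1 + t) <= t.
Proof.
  intro Ht. split.
  - rewrite <- ln_1. apply ln_le; lra.
  - rewrite <- (ln_exp t) at 2. apply ln_le; [lra|].
    destruct (Req_dec t 0) as [->|Hn]; [rewrite exp_0; lra|].
    left; apply exp_ineq1; auto.
Qed.

Lemma lim_C_over_n (C : R) : is_lim_seq (fun n => C / INR n) 0.
Proof.
  replace (Finite 0) with (Rbar_mult C (Rbar_inv p_infty)) by (simpl; f_equal; ring).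
  apply is_lim_seq_scal_l. apply is_lim_seq_inv. apply is_lim_seq_INR. discriminate.
Qed.

Lemma squeeze0 (v : nat -> R) (C : R) :
  eventually (fun n => Rabs (v n) <= C / INR n) -> is_lim_seq v 0.
Proof.
  intro H.
  apply is_lim_seq_le_le_loc with (u := fun n => (- C) / INR n) (w := fun n => C / INR n).
  - destruct H as [N HN]. exists N. intros n Hn. specialize (HN n Hn).
    unfold Rdiv at 1. rewrite Ropp_mult_distr_l_reverse. fold (C / INR n).
    unfold Rabs in HN; destruct Rcase_abs in HN; lra.
  - apply lim_C_over_n.
  - apply lim_C_over_n.
Qed.

Lemma sum_tele (x : R) (n : nat) :
  sum_f_R0 (fun k => / (x + / 2 + INR k)) n =
  Aexp (x + INR n + 1) - Aexp x - sum_f_R0 (fun k => Dd (x + INR k)) n.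
Proof.
  induction n as [|n IH].
  - simpl. unfold Dd. replace (x + 0) with x by ring. replace (x + 0 + 1) with (x + 1) by ring.
    replace (x + / 2 + 0) with (x + / 2) by ring. ring.
  - rewrite !tech5, IH, S_INR.
    set (S := sum_f_R0 (fun k => Dd (x + INR k)) n). unfold Dd.
    replace (x + / 2 + (INR n + 1)) with ((x + INR n + 1) + / 2) by ring.
    replace (x + (INR n + 1)) with (x + INR n + 1) by ring.
    ring.
Qed.

Lemma inv6_le (x y : R) : 2 <= x -> x <= y -> / y ^ 6 <= / x ^ 4 * (/ (y - 1) - / y).
Proof.
  intros Hx Hy.
  replace (/ (y - 1) - / y) with (/ ((y - 1) * y)) by (field; lra).
  rewrite <- Rinv_mult.
  apply Rinv_le_contravar.
  - apply Rmult_lt_0_compat; [apply pow_lt; lra | nra].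
  - assert (x^4 <= y^4) by (apply pow_incr; lra).
    assert (0 <= (y-1)*y <= y^2) by (split; nra).
    replace (y^6) with (y^4 * y^2) by ring.
    apply Rmult_le_compat; try lra. apply pow_le; lra.
Qed.

Lemma sum6_bound (x : R) (n : nat) : 2 <= x ->
  sum_f_R0 (fun k => / (x + INR k) ^ 6) n <= / x ^ 4 * (/ (x - 1) - / (x + INR n)).
Proof.
  intro Hx. induction n as [|n IH].
  - simpl. replace (x + 0) with x by ring. apply inv6_le; lra.
  - rewrite tech5, S_INR.
    assert (0 <= INR n) by apply pos_INR.
    assert (/ (x + (INR n + 1)) ^ 6 <= / x ^ 4 * (/ (x + INR n) - / (x + (INR n + 1)))).
    { replace (x + INR n) with (x + (INR n + 1) - 1) at 1 by ring. apply inv6_le; lra. }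
    lra.
Qed.

Lemma digamma_exp (x : R) : 2 <= x ->
  exists T, 0 <= T <= 2 / x ^ 5 /\ digamma (x + / 2) = Aexp x + T.
Proof.
  intro Hx.
  set (Tn := fun n => sum_f_R0 (fun k => Dd (x + INR k)) n).
  assert (HTb : forall n, Tn n <= 2 / x ^ 5).
  { intro n. unfold Tn.
    apply Rle_trans with (sum_f_R0 (fun k => / (x + INR k) ^ 6) n).
    - apply sum_Rle. intros k _. apply Dd_bound. pose proof (pos_INR k). lra.
    - eapply Rle_trans; [apply sum6_bound; lra|].
      pose proof (pos_INR n).
      assert (0 < / (x + INR n)) by (apply Rinv_0_lt_compat; lra).
      assert (/ (x - 1) <= 2 / x) by (apply Rmult_le_reg_r with (x * (x-1)); [nra|]; field_simplify; lra).
      assert (0 < / x ^ 4) by (apply Rinv_0_lt_compat, pow_lt; lra).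
      apply Rle_trans with (/ x ^ 4 * (2 / x)).
      + apply Rmult_le_compat_l; lra.
      + right. field. lra. }
  assert (HTi : forall n, Tn n <= Tn (S n)).
  { intro n. unfold Tn. rewrite tech5. assert (0 <= Dd (x + INR (S n))).
    { apply Dd_bound. pose proof (pos_INR (S n)). lra. } lra. }
  assert (HT0 : forall n, 0 <= Tn n).
  { induction n. unfold Tn; simpl. apply Dd_bound. replace (x + INR 0) with x by (simpl; ring). lra. specialize (HTi n). lra. }
  destruct (ex_finite_lim_seq_incr Tn (2 / x ^ 5) HTi HTb) as [T HT].
  exists T. split; [split|].
  - apply (is_lim_seq_le (fun _ => 0) Tn 0 T); auto. apply is_lim_seq_const.
  - apply (is_lim_seq_le Tn (fun _ => 2 / x ^ 5) T (2 / x ^ 5)); auto. apply is_lim_seq_const.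
  - unfold digamma.
    assert (Hl : is_lim_seq (fun n => ln (INR n) - sum_f_R0 (fun k => / (x + / 2 + INR k)) n)
                            (Aexp x + T)).
    { apply is_lim_seq_ext with
        (fun n => (ln (INR n) - Aexp (x + INR n + 1)) + Aexp x + Tn n).
      { intro n. rewrite sum_tele. unfold Tn. ring. }
      replace (Aexp x + T) with (0 + Aexp x + T) by ring.
      apply is_lim_seq_plus'; [apply is_lim_seq_plus'|]; auto; [|apply is_lim_seq_const].
      apply squeeze0 with (C := x + 3). exists 1%nat. intros n Hn.
      assert (Hn1 : 1 <= INR n) by (apply (le_INR 1); auto).
      set (z := x + INR n + 1).
      assert (Hz : INR n + 3 <= z) by (unfold z; lra).
      unfold Aexp.
      assert (Hln : ln z - ln (INR n) = ln (1 + (x + 1) / INR n)).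
      { rewrite <- ln_div by lra. f_equal. unfold z. field. lra. }
      assert (H0 : 0 <= (x + 1) / INR n) by (apply Rmult_le_pos; [lra| left; apply Rinv_0_lt_compat; lra]).
      destruct (ln1p_le _ H0) as [Hl1 Hl2].
      assert (Hi2 : 0 <= / (24 * z ^ 2) <= / INR n).
      { split. left. apply Rinv_0_lt_compat. apply Rmult_lt_0_compat; [lra| apply pow_lt; lra].
        apply Rinv_le_contravar; [lra|]. assert (1 <= z^2) by nra. nra. }
      assert (Hi4 : 0 <= 7 / (960 * z ^ 4) <= / INR n).
      { assert (0 < z^4) by (apply pow_lt; lra).
        assert (INR n <= z^4) by (assert (1 <= z) by lra; assert (z <= z^4) by (replace (z^4) with (z*(z*z*z)) by ring; assert (1 <= z*z*z) by (assert (1<=z*z) by nra; nra); nra); lra).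
        unfold Rdiv. split. apply Rmult_le_pos; [lra| left; apply Rinv_0_lt_compat; lra].
        apply Rle_trans with (/ (960 / 7 * z^4) ). right. field. lra.
        apply Rinv_le_contravar; lra. }
      assert (Hxn : (x + 3) / INR n = (x + 1) / INR n + 2 / INR n) by (field; lra).
      assert (H2n : 2 / INR n = / INR n + / INR n) by (field; lra).
      rewrite Hxn, H2n.
      apply Rabs_le. split; lra. }
    rewrite (is_lim_seq_unique _ _ Hl). reflexivity.
Qed.

Lemma lim_from_bound (w : nat -> R) (l C : R) :
  eventually (fun n => Rabs (w n - l) <= C / INR n) -> is_lim_seq w l.
Proof.
  intro H.
  assert (H0 := is_lim_seq_plus' _ _ 0 l (squeeze0 (fun n => w n - l) C H) (is_lim_seq_const l)).
  rewrite Rplus_0_l in H0. eapply is_lim_seq_ext; [|exact H0]. intro; simpl; ring.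
Qed.

Lemma divpow (C N : R) (k : nat) : 0 <= C -> 1 <= N -> C / N ^ (S k) <= C / N.
Proof.
  intros HC HN. assert (H1 : 1 <= N ^ k) by (apply pow_R1_Rle; lra).
  replace (C / N ^ S k) with (C / N * / N ^ k) by (simpl; field; split; [apply pow_nonzero|]; lra).
  assert (0 <= C / N) by (apply Rmult_le_pos; [lra| left; apply Rinv_0_lt_compat; lra]).
  assert (/ N ^ k <= 1) by (rewrite <- Rinv_1; apply Rinv_le_contravar; lra).
  nra.
Qed.

Lemma absdiv (p N : R) (k : nat) : 0 < N -> Rabs (p / N ^ k) = Rabs p / N ^ k.
Proof.
  intro HN. unfold Rdiv. rewrite Rabs_mult, Rabs_inv, (Rabs_pos_eq (N ^ k)); auto.
  apply pow_le; lra.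
Qed.

Lemma bndA (X p q N K : R) : 1 <= N -> 0 <= K ->
  Rabs (X - (p / N ^ 2 + q / N ^ 4)) <= K / N ^ 5 -> Rabs (X - 0) <= (Rabs p + Rabs q + K) / N.
Proof.
  intros HN HK H.
  replace (X - 0) with ((X - (p / N ^ 2 + q / N ^ 4)) + p / N ^ 2 + q / N ^ 4) by ring.
  eapply Rle_trans; [apply Rabs_triang|].
  eapply Rle_trans; [apply Rplus_le_compat_r; apply Rabs_triang|].
  rewrite !absdiv by lra.
  pose proof (divpow (Rabs p) N 1 (Rabs_pos _) HN).
  pose proof (divpow (Rabs q) N 3 (Rabs_pos _) HN).
  pose proof (divpow K N 4 HK HN).
  replace ((Rabs p + Rabs q + K) / N) with (Rabs p / N + Rabs q / N + K / N) by (field; lra).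
  lra.
Qed.

Lemma bndB (X p q N K : R) : 1 <= N -> 0 <= K ->
  Rabs (X - (p / N ^ 2 + q / N ^ 4)) <= K / N ^ 5 -> Rabs (N ^ 2 * X - p) <= (Rabs q + K) / N.
Proof.
  intros HN HK H.
  assert (HN2 : 0 < N ^ 2) by (apply pow_lt; lra).
  replace (N ^ 2 * X - p) with (N ^ 2 * (X - (p / N ^ 2 + q / N ^ 4)) + q / N ^ 2) by (field; lra).
  eapply Rle_trans; [apply Rabs_triang|].
  rewrite Rabs_mult, (Rabs_pos_eq (N^2)) by lra. rewrite absdiv by lra.
  assert (N ^ 2 * Rabs (X - (p / N ^ 2 + q / N ^ 4)) <= K / N ^ 3).
  { replace (K / N ^ 3) with (N ^ 2 * (K / N ^ 5)) by (field; lra).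
    apply Rmult_le_compat_l; lra. }
  pose proof (divpow (Rabs q) N 1 (Rabs_pos _) HN).
  pose proof (divpow K N 2 HK HN).
  replace ((Rabs q + K) / N) with (Rabs q / N + K / N) by (field; lra).
  lra.
Qed.

Lemma bndC (X p q N K : R) : 1 <= N -> 0 <= K ->
  Rabs (X - (p / N ^ 2 + q / N ^ 4)) <= K / N ^ 5 -> Rabs (N ^ 4 * (X - p / N ^ 2) - q) <= K / N.
Proof.
  intros HN HK H.
  assert (HN4 : 0 < N ^ 4) by (apply pow_lt; lra).
  replace (N ^ 4 * (X - p / N ^ 2) - q) with (N ^ 4 * (X - (p / N ^ 2 + q / N ^ 4))) by (field; lra).
  rewrite Rabs_mult, (Rabs_pos_eq (N^4)) by lra.
  replace (K / N) with (N ^ 4 * (K / N ^ 5)) by (field; lra).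
  apply Rmult_le_compat_l; lra.
Qed.

Definition Sc (u v a b : R) := u + v * (ln a - ln b).
Definition s1c (v a b : R) := v / 24 * (/ a ^ 2 - / b ^ 2).
Definition s2c (v a b : R) := - 7 * v / 960 * (/ a ^ 4 - / b ^ 4).

Lemma core (f : nat -> R) (u v a b : R) : 0 < a -> 0 < b ->
  eventually (fun n => f n = u + v * (digamma (a * INR n + / 2) - digamma (b * INR n + / 2))) ->
  is_lim_seq f (Sc u v a b) /\
  is_lim_seq (fun n => INR n ^ 2 * (f n - Sc u v a b)) (s1c v a b) /\
  is_lim_seq (fun n => INR n ^ 4 * (f n - Sc u v a b - s1c v a b / INR n ^ 2)) (s2c v a b).
Proof.
  intros Ha Hb [M HM].
  destruct (INR_archimed 1 (2 / a + 2 / b + 1)) as [N0 HN0]; [lra|].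
  set (K := Rabs v * (2 / a ^ 5 + 2 / b ^ 5)).
  set (c1 := (/ a ^ 2 - / b ^ 2) / 24).
  set (c2 := - 7 * (/ a ^ 4 - / b ^ 4) / 960).
  assert (Hev : forall n, (M <= n)%nat -> (N0 <= n)%nat ->
     1 <= INR n /\ Rabs (f n - Sc u v a b - v * (c1 / INR n ^ 2 + c2 / INR n ^ 4)) <= K / INR n ^ 5).
  { intros n Hn1 Hn2.
    assert (HN : INR N0 <= INR n) by (apply le_INR; auto).
    assert (H2a : 2 / a < INR n) by (assert (0 < 2/b) by (apply Rdiv_lt_0_compat; lra); lra).
    assert (H2b : 2 / b < INR n) by (assert (0 < 2/a) by (apply Rdiv_lt_0_compat; lra); lra).
    assert (Hn : 1 <= INR n) by (assert (0 < 2/a) by (apply Rdiv_lt_0_compat; lra); assert (0 < 2/b) by (apply Rdiv_lt_0_compat; lra); lra).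
    split; [exact Hn|].
    assert (Ha2 : 2 <= a * INR n) by (replace 2 with (a*(2/a)) at 1 by (field; lra); apply Rmult_le_compat_l; lra).
    assert (Hb2 : 2 <= b * INR n) by (replace 2 with (b*(2/b)) at 1 by (field; lra); apply Rmult_le_compat_l; lra).
    destruct (digamma_exp _ Ha2) as [Ta [HTa HdA]].
    destruct (digamma_exp _ Hb2) as [Tb [HTb HdB]].
    rewrite (HM n Hn1), HdA, HdB.
    assert (Heq : u + v * (Aexp (a * INR n) + Ta - (Aexp (b * INR n) + Tb)) - Sc u v a b -
                  v * (c1 / INR n ^ 2 + c2 / INR n ^ 4) = v * (Ta - Tb)).
    { unfold Aexp, Sc, c1, c2. rewrite !ln_mult by lra. field. repeat split; lra. }
    rewrite Heq, Rabs_mult.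
    assert (HTa' : Ta <= 2 / a ^ 5 / INR n ^ 5) by (rewrite Rpow_mult_distr in HTa;
       replace (2 / a ^ 5 / INR n ^ 5) with (2 / (a ^ 5 * INR n ^ 5)) by (field; repeat split; try apply pow_nonzero; lra); lra).
    assert (HTb' : Tb <= 2 / b ^ 5 / INR n ^ 5) by (rewrite Rpow_mult_distr in HTb;
       replace (2 / b ^ 5 / INR n ^ 5) with (2 / (b ^ 5 * INR n ^ 5)) by (field; repeat split; try apply pow_nonzero; lra); lra).
    assert (Hd : Rabs (Ta - Tb) <= (2 / a ^ 5 + 2 / b ^ 5) / INR n ^ 5).
    { apply Rabs_le. replace ((2 / a ^ 5 + 2 / b ^ 5) / INR n ^ 5) with (2 / a ^ 5 / INR n ^ 5 + 2 / b ^ 5 / INR n ^ 5)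
        by (field; repeat split; try apply pow_nonzero; lra).
      assert (0 <= 2 / a ^ 5 / INR n ^ 5) by (assert (0 < a^5) by (apply pow_lt; lra); assert (0 < INR n^5) by (apply pow_lt; lra); unfold Rdiv; repeat apply Rmult_le_pos; try lra; left; apply Rinv_0_lt_compat; lra).
      assert (0 <= 2 / b ^ 5 / INR n ^ 5) by (assert (0 < b^5) by (apply pow_lt; lra); assert (0 < INR n^5) by (apply pow_lt; lra); unfold Rdiv; repeat apply Rmult_le_pos; try lra; left; apply Rinv_0_lt_compat; lra).
      lra. }
    unfold K. unfold Rdiv at 1. rewrite Rmult_assoc.
    apply Rmult_le_compat_l; [apply Rabs_pos|]. exact Hd. }
  assert (HK : 0 <= K).
  { unfold K. apply Rmult_le_pos; [apply Rabs_pos|].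
    assert (0 < a^5) by (apply pow_lt; lra). assert (0 < b^5) by (apply pow_lt; lra).
    assert (0 < 2 / a^5) by (apply Rdiv_lt_0_compat; lra).
    assert (0 < 2 / b^5) by (apply Rdiv_lt_0_compat; lra). lra. }
  assert (Hev' : forall n, (max M N0 <= n)%nat ->
     1 <= INR n /\ Rabs (f n - Sc u v a b - (v * c1 / INR n ^ 2 + v * c2 / INR n ^ 4)) <= K / INR n ^ 5).
  { intros n Hn. destruct (Hev n) as [H1 H2]; try lia. split; auto.
    replace (v * c1 / INR n ^ 2 + v * c2 / INR n ^ 4) with (v * (c1 / INR n ^ 2 + c2 / INR n ^ 4))
      by (field; lra). exact H2. }
  assert (E1 : s1c v a b = v * c1) by (unfold s1c, c1; field; repeat split; lra).
  assert (E2 : s2c v a b = v * c2) by (unfold s2c, c2; field; repeat split; lra).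
  split; [|split].
  - apply lim_from_bound with (Rabs (v * c1) + Rabs (v * c2) + K).
    exists (max M N0). intros n Hn. destruct (Hev' n Hn) as [H1 H2].
    replace (f n - Sc u v a b) with ((f n - Sc u v a b) - 0) by ring.
    eapply bndA; eauto.
  - apply lim_from_bound with (Rabs (v * c2) + K).
    exists (max M N0). intros n Hn. destruct (Hev' n Hn) as [H1 H2].
    rewrite E1. eapply bndB; eauto.
  - apply lim_from_bound with K.
    exists (max M N0). intros n Hn. destruct (Hev' n Hn) as [H1 H2].
    rewrite E1, E2. eapply bndC; eauto.
Qed.

Lemma loc_int (l h t : R) : l < t < h -> locally t (fun s => l < s < h).
Proof.
  intro H. apply (open_and (fun s => l < s) (fun s => s < h) (open_gt l) (open_lt h)). exact H.
Qed.

Lemma dstep (G Dk Dk1 : R -> R) (k : nat) (l h : R) :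
  (forall s, l < s < h -> Derive_n G k s = Dk s) ->
  (forall s, l < s < h -> is_derive Dk s (Dk1 s)) ->
  forall s, l < s < h -> Derive_n G (S k) s = Dk1 s /\ ex_derive (Derive_n G k) s.
Proof.
  intros H1 H2 s Hs.
  assert (Hloc : locally s (fun y => Dk y = Derive_n G k y)).
  { eapply filter_imp; [|apply (loc_int l h s Hs)]. intros y Hy. symmetry; auto. }
  split.
  - simpl. rewrite <- (Derive_ext_loc _ _ _ Hloc). apply is_derive_unique. auto.
  - apply (ex_derive_ext_loc _ _ _ Hloc). eexists. apply H2. auto.
Qed.

Ltac nz := repeat split; try lra; try (apply Rgt_not_eq; repeat apply Rmult_lt_0_compat; try apply pow_lt; lra).


Definition Gf (al be p1 q1 r1 p2 q2 r2 t : R) := al + be * t + p1 * t * ln (q1 * t + r1) + p2 * t * ln (q2 * t + r2).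
Definition G1 (al be p1 q1 r1 p2 q2 r2 t : R) := be + p1 * (ln (q1 * t + r1) + q1 * t / (q1 * t + r1))
                            + p2 * (ln (q2 * t + r2) + q2 * t / (q2 * t + r2)).
Definition G2 (al be p1 q1 r1 p2 q2 r2 t : R) := p1 * q1 / (q1 * t + r1) + p1 * q1 * r1 / (q1 * t + r1) ^ 2
                       + (p2 * q2 / (q2 * t + r2) + p2 * q2 * r2 / (q2 * t + r2) ^ 2).
Definition G3 (al be p1 q1 r1 p2 q2 r2 t : R) := - p1 * q1 ^ 2 / (q1 * t + r1) ^ 2 - 2 * p1 * q1 ^ 2 * r1 / (q1 * t + r1) ^ 3
                       + (- p2 * q2 ^ 2 / (q2 * t + r2) ^ 2 - 2 * p2 * q2 ^ 2 * r2 / (q2 * t + r2) ^ 3).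
Definition G4 (al be p1 q1 r1 p2 q2 r2 t : R) := 2 * p1 * q1 ^ 3 / (q1 * t + r1) ^ 3 + 6 * p1 * q1 ^ 3 * r1 / (q1 * t + r1) ^ 4
                       + (2 * p2 * q2 ^ 3 / (q2 * t + r2) ^ 3 + 6 * p2 * q2 ^ 3 * r2 / (q2 * t + r2) ^ 4).

Lemma dG0 al be p1 q1 r1 p2 q2 r2 s : 0 < q1 * s + r1 -> 0 < q2 * s + r2 ->
  is_derive (Gf al be p1 q1 r1 p2 q2 r2) s (G1 al be p1 q1 r1 p2 q2 r2 s).
Proof. intros H H0. unfold Gf, G1. auto_derive.
  - nz.
  - field; nz. Qed.

Lemma dG1 al be p1 q1 r1 p2 q2 r2 s : 0 < q1 * s + r1 -> 0 < q2 * s + r2 ->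
  is_derive (G1 al be p1 q1 r1 p2 q2 r2) s (G2 al be p1 q1 r1 p2 q2 r2 s).
Proof. intros H H0. unfold G1, G2. auto_derive.
  - nz.
  - field; nz. Qed.

Lemma dG2 al be p1 q1 r1 p2 q2 r2 s : 0 < q1 * s + r1 -> 0 < q2 * s + r2 ->
  is_derive (G2 al be p1 q1 r1 p2 q2 r2) s (G3 al be p1 q1 r1 p2 q2 r2 s).
Proof. intros H H0. unfold G2, G3. auto_derive.
  - nz.
  - field; nz. Qed.

Lemma dG3 al be p1 q1 r1 p2 q2 r2 s : 0 < q1 * s + r1 -> 0 < q2 * s + r2 ->
  is_derive (G3 al be p1 q1 r1 p2 q2 r2) s (G4 al be p1 q1 r1 p2 q2 r2 s).
Proof. intros H H0. unfold G3, G4. auto_derive.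
  - nz.
  - field; nz. Qed.

Lemma Gderivs al be p1 q1 r1 p2 q2 r2 l h :
  (forall t, l < t < h -> 0 < q1 * t + r1 /\ 0 < q2 * t + r2) ->
  forall s, l < s < h ->
  Derive_n (Gf al be p1 q1 r1 p2 q2 r2) 2 s = G2 al be p1 q1 r1 p2 q2 r2 s /\
  Derive_n (Gf al be p1 q1 r1 p2 q2 r2) 3 s = G3 al be p1 q1 r1 p2 q2 r2 s /\
  Derive_n (Gf al be p1 q1 r1 p2 q2 r2) 4 s = G4 al be p1 q1 r1 p2 q2 r2 s /\
  (forall k, (k <= 3)%nat -> ex_derive (Derive_n (Gf al be p1 q1 r1 p2 q2 r2) k) s).
Proof.
  intros Hw.
  set (G := Gf al be p1 q1 r1 p2 q2 r2).
  assert (S0 : forall s, l < s < h -> Derive_n G 0 s = G s) by reflexivity.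
  assert (S1 := dstep G G (G1 al be p1 q1 r1 p2 q2 r2) 0 l h S0
     (fun s Hs => dG0 al be p1 q1 r1 p2 q2 r2 s (proj1 (Hw s Hs)) (proj2 (Hw s Hs)))).
  assert (S2 := dstep G _ (G2 al be p1 q1 r1 p2 q2 r2) 1 l h (fun s Hs => proj1 (S1 s Hs))
     (fun s Hs => dG1 al be p1 q1 r1 p2 q2 r2 s (proj1 (Hw s Hs)) (proj2 (Hw s Hs)))).
  assert (S3 := dstep G _ (G3 al be p1 q1 r1 p2 q2 r2) 2 l h (fun s Hs => proj1 (S2 s Hs))
     (fun s Hs => dG2 al be p1 q1 r1 p2 q2 r2 s (proj1 (Hw s Hs)) (proj2 (Hw s Hs)))).
  assert (S4 := dstep G _ (G4 al be p1 q1 r1 p2 q2 r2) 3 l h (fun s Hs => proj1 (S3 s Hs))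
     (fun s Hs => dG3 al be p1 q1 r1 p2 q2 r2 s (proj1 (Hw s Hs)) (proj2 (Hw s Hs)))).
  intros s Hs.
  split; [apply S2; auto|]. split; [apply S3; auto|]. split; [apply S4; auto|].
  intros k Hk. destruct k as [|[|[|[|k]]]].
  - apply S1; auto.
  - apply S2; auto.
  - apply S3; auto.
  - apply S4; auto.
  - lia.
Qed.

Lemma generic (beta : nat) (tau l h al be p1 q1 r1 p2 q2 r2 : R) (u v a b : R -> R) :
  l < tau < h ->
  (forall t, l < t < h -> 0 < q1 * t + r1 /\ 0 < q2 * t + r2) ->
  (forall t, l < t < h -> 0 < a t /\ 0 < b t /\
     eventually (fun n => Stilde beta (INR n) t =
                  u t + v t * (digamma (a t * INR n + / 2) - digamma (b t * INR n + / 2))) /\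
     Sc (u t) (v t) (a t) (b t) = Gf al be p1 q1 r1 p2 q2 r2 t) ->
  cbeta beta * tau ^ 2 * G2 al be p1 q1 r1 p2 q2 r2 tau = s1c (v tau) (a tau) (b tau) ->
  dbeta beta * (tau ^ 4 * G4 al be p1 q1 r1 p2 q2 r2 tau + 8 * tau ^ 3 * G3 al be p1 q1 r1 p2 q2 r2 tau
                + 12 * tau ^ 2 * G2 al be p1 q1 r1 p2 q2 r2 tau) = s2c (v tau) (a tau) (b tau) ->
  (forall k : nat, (k <= 4)%nat -> ex_derive_n (S0 beta) k tau) /\
  is_lim_seq (fun n : nat => INR n ^ 2 * (Stilde beta (INR n) tau - S0 beta tau))
             (Finite (S1pred beta tau)) /\
  is_lim_seq (fun n : nat => INR n ^ 4 *
                 (Stilde beta (INR n) tau - S0 beta tau - S1pred beta tau / INR n ^ 2))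
             (Finite (S2pred beta tau)).
Proof.
  intros Htau Hw Hc E1 E2.
  set (G := Gf al be p1 q1 r1 p2 q2 r2).
  assert (HS0 : forall t, l < t < h -> S0 beta t = G t).
  { intros t Ht. destruct (Hc t Ht) as [Ha [Hb [Hev HG]]].
    destruct (core _ _ _ _ _ Ha Hb Hev) as [L1 _].
    unfold S0. rewrite (is_lim_seq_unique _ _ L1). simpl. exact HG. }
  assert (HD : forall s k, l < s < h -> Derive_n (S0 beta) k s = Derive_n G k s).
  { intros s k Hs. apply Derive_n_ext_loc.
    eapply filter_imp; [|apply (loc_int l h s Hs)]. intros y Hy. apply HS0; auto. }
  destruct (Gderivs al be p1 q1 r1 p2 q2 r2 l h Hw tau Htau) as [D2 [D3 [D4 Dex]]].
  fold G in D2, D3, D4, Dex.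
  assert (ES1 : S1pred beta tau = s1c (v tau) (a tau) (b tau)).
  { unfold S1pred. rewrite HD, D2 by auto. exact E1. }
  assert (ES2 : S2pred beta tau = s2c (v tau) (a tau) (b tau)).
  { unfold S2pred. rewrite !HD, D2, D3, D4 by auto. exact E2. }
  destruct (Hc tau Htau) as [Ha [Hb [Hev HG]]].
  destruct (core _ _ _ _ _ Ha Hb Hev) as [_ [L2 L3]].
  assert (ES0 : S0 beta tau = Sc (u tau) (v tau) (a tau) (b tau)) by (rewrite HS0 by auto; auto).
  split; [|split].
  - intros k Hk. destruct k as [|k]; [exact I|].
    simpl. apply ex_derive_ext_loc with (Derive_n G k).
    + eapply filter_imp; [|apply (loc_int l h tau Htau)]. intros y Hy. symmetry. apply HD; auto.
    + apply Dex. lia.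
  - rewrite ES0, ES1. exact L2.
  - rewrite ES0, ES1, ES2. exact L3.
Qed.

Ltac nz2 := repeat split; try lra; try (apply Rgt_not_eq; repeat apply Rmult_lt_0_compat; try apply pow_lt; lra).

Lemma caseA tau : 0 < tau < 1 ->
  (forall k : nat, (k <= 4)%nat -> ex_derive_n (S0 1) k tau) /\
  is_lim_seq (fun n : nat => INR n ^ 2 * (Stilde 1 (INR n) tau - S0 1 tau))
             (Finite (S1pred 1 tau)) /\
  is_lim_seq (fun n : nat => INR n ^ 4 *
                 (Stilde 1 (INR n) tau - S0 1 tau - S1pred 1 tau / INR n ^ 2))
             (Finite (S2pred 1 tau)).
Proof.
  intro Ht0.
  apply (generic 1 tau 0 1 0 (2 + ln (/2)) (-1) 1 (/2) 0 0 1 (fun t => 2*t) (fun t => -t)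
           (fun t => t + /2) (fun _ => /2)).
  - lra.
  - intros t Ht; lra.
  - intros t Ht. split; [lra|]. split; [lra|]. split.
    + exists 0%nat. intros n _. unfold Stilde. cbv beta iota zeta.
      rewrite Rabs_pos_eq by lra. destruct (Rlt_dec t 1); [|lra].
      replace (t * INR n + (INR n + 1)/2) with ((t + /2) * INR n + /2) by field.
      replace ((INR n + 1)/2) with (/2 * INR n + /2) by field. ring.
    + unfold Sc, Gf. replace (1*t + /2) with (t + /2) by ring. ring.
  - unfold cbeta, G2, s1c. simpl Nat.eqb. cbv iota. field. nz2.
  - unfold dbeta, G2, G3, G4, s2c. simpl Nat.eqb. cbv iota. field. nz2.
Qed.

Lemma caseB tau : 1 < tau ->
  (forall k : nat, (k <= 4)%nat -> ex_derive_n (S0 1) k tau) /\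
  is_lim_seq (fun n : nat => INR n ^ 2 * (Stilde 1 (INR n) tau - S0 1 tau))
             (Finite (S1pred 1 tau)) /\
  is_lim_seq (fun n : nat => INR n ^ 4 *
                 (Stilde 1 (INR n) tau - S0 1 tau - S1pred 1 tau / INR n ^ 2))
             (Finite (S2pred 1 tau)).
Proof.
  intro Ht0.
  apply (generic 1 tau 1 (tau + 1) 2 0 (-1) 1 (/2) 1 1 (- /2) (fun _ => 2) (fun t => -t)
           (fun t => t + /2) (fun t => t - /2)).
  - lra.
  - intros t Ht; lra.
  - intros t Ht. split; [lra|]. split; [lra|]. split.
    + exists 0%nat. intros n _. unfold Stilde. cbv beta iota zeta.
      rewrite Rabs_pos_eq by lra. destruct (Rlt_dec t 1); [lra|].
      replace (t * INR n + (INR n + 1)/2) with ((t + /2) * INR n + /2) by field.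
      replace (t * INR n + (1 - INR n)/2) with ((t - /2) * INR n + /2) by field. ring.
    + unfold Sc, Gf. replace (1*t + /2) with (t + /2) by ring.
      replace (1*t + - /2) with (t - /2) by ring. ring.
  - unfold cbeta, G2, s1c. simpl Nat.eqb. cbv iota. field. nz2.
  - unfold dbeta, G2, G3, G4, s2c. simpl Nat.eqb. cbv iota. field. nz2.
Qed.

Lemma caseC tau : 0 < tau < 1 ->
  (forall k : nat, (k <= 4)%nat -> ex_derive_n (S0 4) k tau) /\
  is_lim_seq (fun n : nat => INR n ^ 2 * (Stilde 4 (INR n) tau - S0 4 tau))
             (Finite (S1pred 4 tau)) /\
  is_lim_seq (fun n : nat => INR n ^ 4 *
                 (Stilde 4 (INR n) tau - S0 4 tau - S1pred 4 tau / INR n ^ 2))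
             (Finite (S2pred 4 tau)).
Proof.
  intro Ht0.
  apply (generic 4 tau 0 1 0 (/2) (- /4) (-1) 1 0 0 1 (fun t => t/2) (fun t => t/4)
           (fun _ => 1) (fun t => 1 - t)).
  - lra.
  - intros t Ht; lra.
  - intros t Ht. split; [lra|]. split; [lra|]. split.
    + exists 0%nat. intros n _. unfold Stilde. cbv beta iota zeta.
      rewrite Rabs_pos_eq by lra. destruct (Rlt_dec t 1); [|lra].
      replace (INR n + /2) with (1 * INR n + /2) by ring.
      replace (INR n - t * INR n + /2) with ((1 - t) * INR n + /2) by ring. field.
    + unfold Sc, Gf. rewrite ln_1. replace (-1*t + 1) with (1 - t) by ring. field.
  - unfold cbeta, G2, s1c. simpl Nat.eqb. cbv iota. field. nz2.
  - unfold dbeta, G2, G3, G4, s2c. simpl Nat.eqb. cbv iota. field. nz2.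
Qed.

Lemma caseD tau : 1 < tau < 2 ->
  (forall k : nat, (k <= 4)%nat -> ex_derive_n (S0 4) k tau) /\
  is_lim_seq (fun n : nat => INR n ^ 2 * (Stilde 4 (INR n) tau - S0 4 tau))
             (Finite (S1pred 4 tau)) /\
  is_lim_seq (fun n : nat => INR n ^ 4 *
                 (Stilde 4 (INR n) tau - S0 4 tau - S1pred 4 tau / INR n ^ 2))
             (Finite (S2pred 4 tau)).
Proof.
  intro Ht0.
  apply (generic 4 tau 1 2 0 (/2) (- /4) 1 (-1) 0 0 1 (fun t => t/2) (fun t => t/4)
           (fun _ => 1) (fun t => t - 1)).
  - lra.
  - intros t Ht; lra.
  - intros t Ht. split; [lra|]. split; [lra|]. split.
    + destruct (INR_archimed (2 - t) 1) as [n0 Hn0]; [lra|].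
      exists n0. intros n Hn. unfold Stilde. cbv beta iota zeta.
      assert (HN : INR n0 <= INR n) by (apply le_INR; auto).
      assert (HNp : 0 < INR n) by nra.
      assert (Hlt : t < 2 - / INR n).
      { assert (/ INR n < 2 - t); [|lra].
        apply Rmult_lt_reg_r with (INR n); [lra|]. rewrite Rinv_l by lra. nra. }
      rewrite Rabs_pos_eq by lra. destruct (Rlt_dec t 1); [lra|].
      destruct (Rlt_dec t (2 - / INR n)); [|lra].
      replace (INR n + /2) with (1 * INR n + /2) by ring.
      replace (- INR n + t * INR n + /2) with ((t - 1) * INR n + /2) by ring. field.
    + unfold Sc, Gf. rewrite ln_1. replace (1*t + -1) with (t - 1) by ring. field.
  - unfold cbeta, G2, s1c. simpl Nat.eqb. cbv iota. field. nz2.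
  - unfold dbeta, G2, G3, G4, s2c. simpl Nat.eqb. cbv iota. field. nz2.
Qed.

Lemma caseE tau : 2 < tau ->
  (forall k : nat, (k <= 4)%nat -> ex_derive_n (S0 4) k tau) /\
  is_lim_seq (fun n : nat => INR n ^ 2 * (Stilde 4 (INR n) tau - S0 4 tau))
             (Finite (S1pred 4 tau)) /\
  is_lim_seq (fun n : nat => INR n ^ 4 *
                 (Stilde 4 (INR n) tau - S0 4 tau - S1pred 4 tau / INR n ^ 2))
             (Finite (S2pred 4 tau)).
Proof.
  intro Ht0.
  apply (generic 4 tau 2 (tau + 1) 1 0 0 0 1 0 0 1 (fun _ => 1) (fun _ => 0)
           (fun _ => 1) (fun _ => 1)).
  - lra.
  - intros t Ht; lra.
  - intros t Ht. split; [lra|]. split; [lra|]. split.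
    + exists 1%nat. intros n Hn. unfold Stilde. cbv beta iota zeta.
      assert (HN : 1 <= INR n) by (apply (le_INR 1); auto).
      assert (0 < / INR n) by (apply Rinv_0_lt_compat; lra).
      rewrite Rabs_pos_eq by lra. destruct (Rlt_dec t 1); [lra|].
      destruct (Rlt_dec t (2 - / INR n)); [lra|]. ring.
    + unfold Sc, Gf. ring.
  - unfold cbeta, G2, s1c. simpl Nat.eqb. cbv iota. field.
  - unfold dbeta, G2, G3, G4, s2c. simpl Nat.eqb. cbv iota. field.
Qed.

Theorem mainTheorem8 (beta : nat) (tau : R) :
  (beta = 1%nat \/ beta = 4%nat) ->
  0 < tau -> tau <> 1 -> (beta = 4%nat -> tau <> 2) ->
  (forall k : nat, (k <= 4)%nat -> ex_derive_n (S0 beta) k tau) /\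
  is_lim_seq (fun n : nat => INR n ^ 2 * (Stilde beta (INR n) tau - S0 beta tau))
             (Finite (S1pred beta tau)) /\
  is_lim_seq (fun n : nat => INR n ^ 4 *
                 (Stilde beta (INR n) tau - S0 beta tau - S1pred beta tau / INR n ^ 2))
             (Finite (S2pred beta tau)).
Proof.
  intros [-> | ->] Hpos H1 H2.
  - destruct (Rlt_or_le tau 1).
    + apply caseA; lra.
    + apply caseB. destruct H; [lra| congruence].
  - destruct (Rlt_or_le tau 1).
    + apply caseC; lra.
    + assert (tau <> 2) by auto.
      destruct (Rlt_or_le tau 2).
      * apply caseD. split; [|lra]. destruct H; [lra|congruence].
      * apply caseE. destruct H3; [lra|congruence].
Qed.
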